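(* Consider the multi-arm multi-stage platform design described in the context, with arbitrary pre-specified adding stages $s(1),\dots,s(K)$, numbers of analyses $J_1,\dots,J_K$, sample sizes and boundaries $l_{k,j}\le u_{k,j}$ (with $l_{k,J_k}=u_{k,J_k}$). For any vector of true means $(\mu_0,\mu_1,\dots,\mu_K)$ (equivalently any $\Theta=(\theta_1,\dots,\theta_K)$ with $\theta_k=\mu_k-\mu_0$), $$P(\text{reject at least one true } H_{0k}\mid \Theta)\;\le\; P(\text{reject at least one true } H_{0k}\mid H_G),$$ where the right-hand side is computed under the global null hypothesis $H_G:\mu_0=\mu_1=\dots=\mu_K$ (under which every $H_{0k}$ is true). In particular, the family-wise error rate is maximised under the global null hypothesis.
   Context: A trial compares $K$ experimental arms with one common control arm (arm $0$). Outcomes on arm $k\in\{0,\dots,K\}$ are independent $N(\mu_k,\sigma^2)$ with $\sigma^2$ known. The control is recruited over stages $1,\dots,J_0$, with an analysis at the end of each stage; $n_{0,j}$ denotes the cumulative number of control patients by the end of stage $j$ ($n_{0,0}=0$). Experimental arm $k$ is added at the end of control stage $s(k)\ge 0$ and has analyses $j=1,\dots,J_k$ (with $s(k)+J_k\le J_0$), its $j$-th analysis coinciding with the end of control stage $s(k)+j$; $n_{k,j}$ denotes the cumulative number of patients on arm $k$ by its $j$-th analysis. Only concurrent controls are used: the test statistic for arm $k$ at its $j$-th analysis is $$Z_{k,j}=\frac{n_{k,j}^{-1}\sum_{i=1}^{n_{k,j}}X_{k,i}-(n_{0,s(k)+j}-n_{0,s(k)})^{-1}\sum_{i=n_{0,s(k)}+1}^{n_{0,s(k)+j}}X_{0,i}}{\sigma\sqrt{n_{k,j}^{-1}+(n_{0,s(k)+j}-n_{0,s(k)})^{-1}}},$$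 where $X_{k,i}$ is the outcome of the $i$-th patient on arm $k$. The null hypotheses are $H_{0k}:\mu_k\le\mu_0$, $k=1,\dots,K$. Pre-specified boundaries $l_{k,j}\le u_{k,j}$, $j=1,\dots,J_k$, with $l_{k,J_k}=u_{k,J_k}$, are used as follows: at the $j$-th analysis of an arm $k$ still in the trial, if $Z_{k,j}>u_{k,j}$ then $H_{0k}$ is rejected and the whole trial stops; if $Z_{k,j}<l_{k,j}$ arm $k$ is dropped from all subsequent stages; otherwise arm $k$ (and the control) continue to the next stage. The trial also stops if all arms have been dropped. A hypothesis not rejected by these rules is not rejected. The ''probability of rejecting at least one true $H_{0k}$'' is the probability, under the given means, that this procedure rejects some $H_{0k}$ with $\mu_k\le\mu_0$. *)

(* Defs.v *)
From HB Require Import structures.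
From mathcomp Require Import all_boot all_order all_algebra.
From mathcomp Require Import all_classical all_reals all_analysis.
Set Implicit Arguments. Unset Strict Implicit. Unset Printing Implicit Defensive.
Import Order.TTheory GRing.Theory Num.Theory.
Local Open Scope classical_set_scope.
Local Open Scope ring_scope.

(* Arms are indexed by 'I_K.+1; arm ord0 is the common control arm 0,
   arms k <> ord0 are the experimental arms 1..K.  Patients on an arm are
   indexed by nat starting at 0 (patient i in the code = patient i+1 in the
   paper). *)

Definition mutually_independent d (T : measurableType d) (R : realType)
  (P : probability T R) (I : eqType) (Y : I -> T -> R) : Prop :=
  forall (F : seq I) (B : I -> set R), uniq F ->
    (forall i, measurable (B i)) ->
    P (\bigcap_(i in [set` F]) (Y i @^-1` B i)) = (\prod_(i <- F) P (Y i @^-1` B i))%E.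

Definition normal_outcomes d (T : measurableType d) (R : realType)
  (P : probability T R) (K : nat) (mu : 'I_K.+1 -> R) (sigma : R)
  (X : 'I_K.+1 -> nat -> T -> R) : Prop :=
  (forall k i, measurable_fun setT (X k i)) /\
  (forall k i (B : set R), measurable B ->
      P (X k i @^-1` B) = normal_prob (mu k) sigma B) /\
  mutually_independent P (fun p : 'I_K.+1 * nat => X p.1 p.2).

Section Trial.
Context {T : Type} {R : realType} {K : nat}.
Variables (sigma : R) (n0 : nat -> nat) (s J : 'I_K.+1 -> nat)
  (n : 'I_K.+1 -> nat -> nat) (l u : 'I_K.+1 -> nat -> R)
  (X : 'I_K.+1 -> nat -> T -> R).

(** Test statistic Z_{k,j}, using concurrent controls only: the control
    patients recruited during control stages s(k)+1 .. s(k)+j, i.e. the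
    (0-indexed) control patients n0(s k) <= i < n0(s k + j). *)
Definition Zstat (k : 'I_K.+1) (j : nat) (w : T) : R :=
  let nk := (n k j)%:R in
  let nc := (n0 (s k + j) - n0 (s k))%:R in
  ((\sum_(i < n k j) X k i w) / nk
     - (\sum_(n0 (s k) <= i < n0 (s k + j)) X ord0 i w) / nc)
  / (sigma * Num.sqrt (nk^-1 + nc^-1)).

(** Arm k would reject at control stage t (its analysis j = t - s k) if the
    trial had not been stopped by an earlier rejection: the analysis exists,
    the arm was not dropped at any earlier analysis, and Z exceeds u. *)
Definition raw_reject (k : 'I_K.+1) (t : nat) (w : T) : Prop :=
  [/\ (s k < t)%N, (t - s k <= J k)%N,
      (forall j', (1 <= j')%N -> (j' < t - s k)%N -> l k j' <= Zstat k j' w)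
    & u k (t - s k) < Zstat k (t - s k) w].

(** H_{0k} is rejected by the procedure: arm k rejects at some stage t at
    which the trial is still running, i.e. no experimental arm rejected at an
    earlier stage (a rejection stops the whole trial). *)
Definition rejects (k : 'I_K.+1) (w : T) : Prop :=
  k != ord0 /\
  exists t, raw_reject k t w /\
    forall k' t', k' != ord0 -> (t' < t)%N -> ~ raw_reject k' t' w.

Definition reject_true_null (mu : 'I_K.+1 -> R) : set T :=
  [set w | exists k : 'I_K.+1, [/\ k != ord0, mu k <= mu ord0 & rejects k w]].

End Trial.

Definition valid_design {R : realType} (K J0 : nat) (n0 : nat -> nat)
  (s J : 'I_K.+1 -> nat) (n : 'I_K.+1 -> nat -> nat) (l u : 'I_K.+1 -> nat -> R) : Prop :=
  [/\ n0 0 = 0%N,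
      (forall j, (j < J0)%N -> (n0 j < n0 j.+1)%N) &
      forall k : 'I_K.+1, k != ord0 ->
        [/\ (0 < J k)%N /\ (s k + J k <= J0)%N,
            (forall j, (1 <= j <= J k)%N -> (0 < n k j)%N),
            (forall j, (1 <= j < J k)%N -> (n k j <= n k j.+1)%N),
            (forall j, (1 <= j <= J k)%N -> l k j <= u k j)
          & l k (J k) = u k (J k)]].

(* Main.v *)
Require Import Defs.
From HB Require Import structures.
From mathcomp Require Import all_boot all_order all_algebra.
From mathcomp Require Import all_classical all_reals all_analysis.
From mathcomp Require Import measurable_realfun normal_distribution.
From mathcomp Require Import ring lra.
Import Order.TTheory GRing.Theory Num.Theory.
Local Open Scope classical_set_scope.
Local Open Scope ring_scope.
Section Meas.
Context {R : realType} {K : nat} {d : measure_display} {T : measurableType d}.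
Variables (sigma : R) (n0 : nat -> nat) (s J : 'I_K.+1 -> nat)
  (n : 'I_K.+1 -> nat -> nat) (l u : 'I_K.+1 -> nat -> R)
  (X : 'I_K.+1 -> nat -> T -> R).
Hypothesis mX : forall k i, measurable_fun setT (X k i).

Lemma mZ k j : measurable_fun setT (Zstat sigma n0 s n X k j).
Proof.
rewrite /Zstat; apply: measurable_funM; last exact: measurable_cst.
apply: measurable_funB; apply: measurable_funM; try exact: measurable_cst;
  by apply: measurable_sum.
Qed.

Lemma mlt (f : T -> R) a : measurable_fun setT f -> measurable [set w | a < f w].
Proof.
move=> mf; have := mf measurableT _ (measurable_itv `]a, +oo[).
rewrite setTI; congr measurable; apply/seteqP; split => w /=; rewrite in_itv /= andbT //.
Qed.

Lemma mle (f : T -> R) a : measurable_fun setT f -> measurable [set w | a <= f w].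
Proof.
move=> mf; have := mf measurableT _ (measurable_itv `[a, +oo[).
rewrite setTI; congr measurable; apply/seteqP; split => w /=; rewrite in_itv /= andbT //.
Qed.

Lemma mraw k t : measurable [set w | raw_reject sigma n0 s J n l u X k t w].
Proof.
set S := (X in measurable X).
have [/andP[h1 h2]|h] := boolP ((s k < t)%N && (t - s k <= J k)%N); last first.
  suff -> : S = set0 by exact: measurable0.
  apply/seteqP; split => w //= [a b _ _]; by rewrite a b in h.
suff -> : S = (\bigcap_j [set w | (1 <= j)%N -> (j < t - s k)%N ->
     l k j <= Zstat sigma n0 s n X k j w]) `&` [set w | u k (t - s k) < Zstat sigma n0 s n X k (t - s k) w].
  apply: measurableI; last exact/mlt/mZ.
  apply: bigcapT_measurable => j.
  have [/andP[j1 j2]|hj] := boolP ((1 <= j)%N && (j < t - s k)%N).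
    set S' := (X in measurable X).
    suff -> : S' = [set w | l k j <= Zstat sigma n0 s n X k j w] by exact/mle/mZ.
    by apply/seteqP; split => w /=; [move=> H; apply: H|move=> H _ _].
  set S' := (X in measurable X).
  suff -> : S' = setT by exact: measurableT.
  apply/seteqP; split => w //= _ a b; by rewrite a b in hj.
apply/seteqP; split => w /=.
  by case=> _ _ H1 H2; split => // j _; apply: H1.
by case=> H1 H2; split => // j a b; exact: (H1 j I a b).
Qed.


Lemma mbigcapU (U : countType) (F : U -> set T) :
  (forall i, measurable (F i)) -> measurable (\bigcap_i F i).
Proof.
move=> mF; rewrite -[X in measurable X]setCK setC_bigcap; apply: measurableC.
by apply: countable_bigcupT_measurable; [exact: countableP|move=> i; exact: measurableC].
Qed.

Lemma mbigcupU (U : countType) (F : U -> set T) :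
  (forall i, measurable (F i)) -> measurable (\bigcup_i F i).
Proof. by move=> mF; apply: countable_bigcupT_measurable; [exact: countableP|]. Qed.

Lemma mimpl (b : Prop) (A : set T) : measurable A -> measurable [set w | b -> A w].
Proof.
move=> mA; have [hb|hb] := pselect b.
  by suff -> : [set w | b -> A w] = A by []; apply/seteqP; split => w /=; auto.
by suff -> : [set w | b -> A w] = setT by []; apply/seteqP; split => w //=.
Qed.

Lemma mand (b : Prop) (A : set T) : measurable A -> measurable [set w | b /\ A w].
Proof.
move=> mA; have [hb|hb] := pselect b.
  by suff -> : [set w | b /\ A w] = A by []; apply/seteqP; split => w /=; [case|].
by suff -> : [set w | b /\ A w] = set0 by []; apply/seteqP; split => w //= [].
Qed.

Lemma mrejects k : measurable [set w | rejects sigma n0 s J n l u X k w].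
Proof.
suff -> : [set w | rejects sigma n0 s J n l u X k w] =
  [set w | k != ord0 /\ (\bigcup_t ([set w | raw_reject sigma n0 s J n l u X k t w] `&`
     \bigcap_(k' : 'I_K.+1) \bigcap_(t' : nat) [set w | k' != ord0 -> [set w | (t' < t)%N ->
        (~` [set w | raw_reject sigma n0 s J n l u X k' t' w]) w] w])) w].
  apply: mand; apply: bigcupT_measurable => t; apply: measurableI; first exact: mraw.
  apply: mbigcapU => k'; apply: bigcapT_measurable => t'.
  by apply: mimpl; apply: mimpl; apply: measurableC; exact: mraw.
apply/seteqP; split => w /=.
  case=> k0 [t [H1 H2]]; split => //; exists t => //; split => // k' _ t' _; exact: H2.
case=> k0 [t _ [H1 H2]]; split => //; exists t; split => // k' t' a b; exact: (H2 k' I t' I a b).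
Qed.

Lemma mrtn (mu : 'I_K.+1 -> R) :
  measurable (reject_true_null sigma n0 s J n l u X mu).
Proof.
suff -> : reject_true_null sigma n0 s J n l u X mu =
  \bigcup_(k : 'I_K.+1) [set w | k != ord0 /\ [set w | mu k <= mu ord0 /\
     [set w | rejects sigma n0 s J n l u X k w] w] w].
  by apply: mbigcupU => k; apply: mand; apply: mand; exact: mrejects.
apply/seteqP; split => w /=.
  by case=> k [a b c]; exists k.
by case=> k _ [a [b c]]; exists k.
Qed.

Definition anyrej := [set w | exists k t, k != ord0 /\ raw_reject sigma n0 s J n l u X k t w].

Lemma manyrej : measurable anyrej.
Proof.
suff -> : anyrej = \bigcup_(k : 'I_K.+1) \bigcup_(t : nat)
   [set w | k != ord0 /\ [set w | raw_reject sigma n0 s J n l u X k t w] w].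
  by apply: mbigcupU => k; apply: bigcupT_measurable => t; apply: mand; exact: mraw.
apply/seteqP; split => w /=.
  by case=> k [t [a b]]; exists k => //; exists t.
by case=> k _ [t _ [a b]]; exists k, t.
Qed.

End Meas.
Section Comb.
Context {R : realType} {K J0 : nat} {T : Type}.
Variables (sigma : R) (n0 : nat -> nat) (s J : 'I_K.+1 -> nat)
  (n : 'I_K.+1 -> nat -> nat) (l u : 'I_K.+1 -> nat -> R).

Lemma rtn_global (X : 'I_K.+1 -> nat -> T -> R) (nu : R) :
  reject_true_null sigma n0 s J n l u X (fun _ => nu) =
  [set w | exists k t, k != ord0 /\ raw_reject sigma n0 s J n l u X k t w].
Proof.
apply/seteqP; split => w /=.
  by case=> k [k0 _ [_ [t [H _]]]]; exists k, t.
case=> k [t [k0 H]].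
suff : exists k, k != ord0 /\ rejects sigma n0 s J n l u X k w.
  by case=> k' [k'0 H']; exists k'; split.
elim/ltn_ind: t k k0 H => t IH k k0 H.
have [[k' [t' [k'0 [t't H']]]]|no] := pselect (exists k' t', k' != ord0 /\ (t' < t)%N /\
   raw_reject sigma n0 s J n l u X k' t' w).
  exact: (IH t' t't k' k'0 H').
exists k; split => //; split => //; exists t; split => // k' t' k'0 t't H'.
by apply: no; exists k', t'.
Qed.

Hypothesis vd : valid_design J0 n0 s J n l u.
Hypothesis sigma0 : 0 < sigma.

Lemma n0_lt a b : (a < b)%N -> (b <= J0)%N -> (n0 a < n0 b)%N.
Proof.
case: vd => _ inc _.
elim: b => // b IH ab bJ.
have := inc b (leq_trans (ltnSn b) bJ).
rewrite ltnS leq_eqVlt in ab; case/orP: ab => [/eqP -> //|ab] h.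
exact: ltn_trans (IH ab (ltnW bJ)) h.
Qed.

Lemma Zshift (X : 'I_K.+1 -> nat -> T -> R) (c : 'I_K.+1 -> R) k j w :
  k != ord0 -> (1 <= j <= J k)%N -> c ord0 <= c k ->
  Zstat sigma n0 s n X k j w <= Zstat sigma n0 s n (fun k i w => X k i w + c k) k j w.
Proof.
move=> k0 /andP[j1 jJ] ck.
case: vd => _ _ /(_ k k0) [[Jk0 sJ] npos _ _ _].
have nk : (0 < n k j)%N by apply: npos; rewrite j1.
have nc : (n0 (s k) < n0 (s k + j))%N.
  apply: n0_lt; first by rewrite -{1}(addn0 (s k)) ltn_add2l.
  by rewrite (leq_trans _ sJ) // leq_add2l.
rewrite /Zstat.
have e1 : \sum_(i < n k j) (X k i w + c k) = \sum_(i < n k j) X k i w + c k * (n k j)%:R.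
  by rewrite big_split /= sumr_const card_ord mulr_natr.
have e2 : \sum_(n0 (s k) <= i < n0 (s k + j)) (X ord0 i w + c ord0) =
   \sum_(n0 (s k) <= i < n0 (s k + j)) X ord0 i w + c ord0 * (n0 (s k + j) - n0 (s k))%:R.
  by rewrite big_split /= sumr_const_nat mulr_natr.
rewrite e1 e2.
move: (\sum_(i < n k j) X k i w) (\sum_(n0 (s k) <= i < n0 (s k + j)) X ord0 i w) => S1 S2.
have N0 : (n k j)%:R != 0 :> R by rewrite pnatr_eq0 -lt0n.
have M0 : (n0 (s k + j) - n0 (s k))%:R != 0 :> R by rewrite pnatr_eq0 -lt0n subn_gt0.
have Npos : 0 < (n k j)%:R :> R by rewrite ltr0n.
have Mpos : 0 < (n0 (s k + j) - n0 (s k))%:R :> R by rewrite ltr0n subn_gt0.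
move: N0 M0 Npos Mpos; move: (n k j)%:R (n0 (s k + j) - n0 (s k))%:R => N M N0 M0 Np Mp.
have Dpos : 0 < sigma * Num.sqrt (N^-1 + M^-1).
  by rewrite mulr_gt0 // sqrtr_gt0 addr_gt0 // invr_gt0.
move: Dpos; move: (sigma * _) => D Dpos.
have -> : ((S1 + c k * N) / N - (S2 + c ord0 * M) / M) / D =
   (S1 / N - S2 / M) / D + (c k - c ord0) / D.
  by field; rewrite N0 M0 gt_eqF.
by rewrite lerDl divr_ge0 // ?subr_ge0 // ltW.
Qed.

Lemma incl (X : 'I_K.+1 -> nat -> T -> R) (mu : 'I_K.+1 -> R) (nu : R) :
  reject_true_null sigma n0 s J n l u X mu `<=`
  [set w | exists k t, k != ord0 /\ raw_reject sigma n0 s J n l u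
     (fun k i w => X k i w + (nu - mu k)) k t w].
Proof.
move=> w [k [k0 muk [_ [t [[st tJ Hl Hu] _]]]]].
exists k, t; split => //.
have cc : nu - mu ord0 <= nu - mu k by rewrite lerD2l lerN2.
split => //.
  move=> j' j1 j2; apply: (le_trans (Hl j' j1 j2)); apply: Zshift => //.
  by rewrite j1 /= (leq_trans (ltnW j2)).
apply: (lt_le_trans Hu); apply: Zshift => //.
by rewrite tJ subn_gt0 st.
Qed.

End Comb.
Section Shift.
Variable (R : realType).

Lemma mshift (c : R) : measurable_fun setT (fun x : R => x + c).
Proof. by apply: measurable_funD => //; exact: measurable_cst. Qed.

Lemma mshift' (c : R) : @measurable_fun _ _ (measurableTypeR R) (measurableTypeR R) setT (fun x : R => x + c).
Proof. exact: mshift. Qed.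

Definition mm (c : R) : {measure set (measurableTypeR R) -> \bar R} :=
  @measure_function_pushforward__canonical__measure_function_Measure _ _ (measurableTypeR R) (measurableTypeR R) _
    lebesgue_measure (fun x : R => x + c) (mshift' c).

Lemma leb_shift (c : R) (A : set R) : measurable A ->
  lebesgue_measure ((fun x => x + c) @^-1` A) = lebesgue_measure A.
Proof.
move=> mA; symmetry; transitivity (mm c A); last by [].
apply: lebesgue_measure_unique => //.
move=> _ [[a b] _ <-] /=.
rewrite /mm /= /pushforward.
have -> : (fun x : R => x + c) @^-1` `]a, b] = `]a - c, b - c]%classic.
  by apply/seteqP; split => x /=; rewrite !in_itv /= ltrBlDr lerBrDr.
rewrite !lebesgue_measure_itv /= !lte_fin ltrD2r.
by case: ifP => // _; rewrite -!EFinB; congr EFin; ring.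
Qed.

Definition mmD (c : R) : {measure set R -> \bar R} :=
  @measure_function_pushforward__canonical__measure_function_Measure _ _ _ _ _
    lebesgue_measure (fun x : R => x + c) (mshift c).

Lemma normal_shift (m s c : R) (B : set R) : s != 0 -> measurable B ->
  normal_prob m s ((fun x => x + c) @^-1` B) = normal_prob (m + c) s B.
Proof.
move=> s0 mB; rewrite /normal_prob; symmetry.
rewrite (@eq_measure_integral _ (measurableTypeR R) _ B (mm c)); last first.
  by move=> A mA _; rewrite /mm /= /pushforward leb_shift.
have mpdf : @measurable_fun _ _ (measurableTypeR R) _ B (fun x => (normal_pdf (m + c) s x)%:E).
  apply/measurable_EFinP; apply: measurable_funS (measurable_normal_pdf _ _) => //.
have H := @ge0_integral_pushforward _ _ (measurableTypeR R) (measurableTypeR R) R (fun x => x + c) (mshift' c)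
  lebesgue_measure B (fun x => (normal_pdf (m + c) s x)%:E) mB mpdf
  (fun y _ => normal_pdf_ge0 _ _ _).
etransitivity; first exact: H.
apply: eq_integral => x _ /=; congr EFin.
rewrite /normal_pdf (negbTE s0) /normal_fun.
by rewrite opprD addrACA subrr addr0.
Qed.
End Shift.

Definition IR (R : realType) (K : nat) := ('I_K.+1 * nat -> R)%type.
HB.instance Definition _ R K := gen_eqMixin (IR R K).
HB.instance Definition _ R K := gen_choiceMixin (IR R K).
HB.instance Definition _ R K := isPointed.Build (IR R K) (fun _ => 0).
Section Dist.
Context (R : realType) (K : nat).
Local Notation I := ('I_K.+1 * nat)%type.
Local Notation IR := (IR R K).
Definition cyl (F : seq I) (B : I -> set R) : set IR :=
  [set x | forall i, i \in F -> B i (x i)].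
Definition Gcyl : set (set IR) :=
  [set A | exists F B, (forall i, measurable (B i)) /\ A = cyl F B].
Definition Om : measurableType _ := g_sigma_algebraType Gcyl.


Lemma GcylI : setI_closed Gcyl.
Proof.
move=> _ _ [F1 [B1 [mB1 ->]]] [F2 [B2 [mB2 ->]]].
exists (F1 ++ F2), (fun i => (if i \in F1 then B1 i else setT) `&` (if i \in F2 then B2 i else setT)).
split.
  by move=> i; apply: measurableI; case: ifP.
apply/seteqP; split => x /=.
  case=> H1 H2 i; rewrite mem_cat => _; split.
    by case: ifP => // /H1.
  by case: ifP => // /H2.
move=> H; split => i iF.
  by have := H i; rewrite mem_cat iF /= => /(_ isT) [].
by have := H i; rewrite mem_cat iF orbT /= => /(_ isT) [].
Qed.

Lemma GcylT : Gcyl setT.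
Proof.
exists [::], (fun _ => setT); split => //.
by apply/seteqP; split => x //=.
Qed.

Variables (d : measure_display) (T : measurableType d).

Lemma mcylpre (Z : I -> T -> R) (F : seq I) (B : I -> set R) : (forall i, measurable_fun setT (Z i)) ->
  (forall i, measurable (B i)) ->
  measurable [set w | forall i, i \in F -> B i (Z i w)].
Proof.
move=> mZ mB; elim: F => [|a F IH].
  by suff -> : [set w | forall i : I, i \in ([::] : seq I) -> B i (Z i w)] = setT by [];
     apply/seteqP; split => w //=.
suff -> : [set w | forall i, i \in a :: F -> B i (Z i w)] =
   (setT `&` Z a @^-1` B a) `&` [set w | forall i, i \in F -> B i (Z i w)].
  by apply: measurableI => //; apply: mZ.
apply/seteqP; split => w /=.
  by move=> H; split; [split => //; apply: H; rewrite mem_head|move=> i iF; apply: H; rewrite inE iF orbT].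
case=> [[_ Ha] H] i; rewrite inE => /orP [/eqP -> //|]; exact: H.
Qed.

Lemma mmap (Z : I -> T -> R) : (forall i, measurable_fun setT (Z i)) ->
  measurable_fun setT (fun w => (fun i => Z i w) : Om).
Proof.
move=> mZ; apply: (@measurability _ _ _ Om setT _ Gcyl) => //.
move=> _ [_ [F [B [mB ->]]] <-]; rewrite setTI.
exact: mcylpre.
Qed.

Lemma cyl_prob (P : probability T R) (Z : I -> T -> R)
  (ind : mutually_independent P Z) (F : seq I) (B : I -> set R) :
  (forall i, measurable (B i)) ->
  P [set w | forall i, i \in F -> B i (Z i w)] = (\prod_(i <- undup F) P (Z i @^-1` B i))%E.
Proof.
move=> mB; rewrite -(ind (undup F) B (undup_uniq F) mB); congr (P _).
apply/seteqP; split => w /=.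
  by move=> H i /=; rewrite mem_undup => /H.
by move=> H i iF; apply: H => /=; rewrite mem_undup.
Qed.

Definition pmeas (P : probability T R) (Z : I -> T -> R)
   (mZ : forall i, measurable_fun setT (Z i)) : {measure set Om -> \bar R} :=
  @measure_function_pushforward__canonical__measure_function_Measure _ _ T Om R P
    (fun w => (fun i => Z i w) : Om) (@mmap Z mZ).

End Dist.

Lemma law_eq (R : realType) (K : nat) (sigma : R) (mu : 'I_K.+1 -> R) (nu : R)
  (d : measure_display) (T : measurableType d) (P : probability T R)
  (X : 'I_K.+1 -> nat -> T -> R)
  (d' : measure_display) (T' : measurableType d') (P' : probability T' R)
  (Y : 'I_K.+1 -> nat -> T' -> R) :
  sigma != 0 ->
  normal_outcomes P mu sigma X ->
  normal_outcomes P' (fun _ => nu) sigma Y ->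
  forall A : set (Om R K), measurable A ->
  P ((fun w => (fun p => X p.1 p.2 w + (nu - mu p.1)) : Om R K) @^-1` A) =
  P' ((fun w => (fun p => Y p.1 p.2 w) : Om R K) @^-1` A).
Proof.
move=> s0 [mX [lX iX]] [mY [lY iY]] A mA.
have mX' : forall i : ('I_K.+1 * nat), measurable_fun setT (fun w => X i.1 i.2 w + (nu - mu i.1)).
  by move=> i; apply: measurable_funD => //; exact: measurable_cst.
have mY' : forall i : ('I_K.+1 * nat), measurable_fun setT (fun w => Y i.1 i.2 w).
  by move=> i; exact: mY.
have -> : P ((fun w => (fun p => X p.1 p.2 w + (nu - mu p.1)) : Om R K) @^-1` A) =
  @pmeas R K _ T P _ mX' A by [].
have -> : P' ((fun w => (fun p => Y p.1 p.2 w) : Om R K) @^-1` A) =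
  @pmeas R K _ T' P' _ mY' A by [].
have U := @measure_unique _ R (Om R K) (Gcyl R K) (fun _ => setT) erefl.
apply: (U (GcylI R K) (fun _ => GcylT R K)) => //.
- by rewrite bigcup_const.
- move=> _ [F [B [mB ->]]].
  rewrite /pmeas /= /pushforward /cyl /=.
  have mB' : forall i : ('I_K.+1 * nat), measurable ((fun x => x + (nu - mu i.1)) @^-1` B i).
    move=> i; rewrite -[X in measurable X]setTI; apply: mshift => //.
  rewrite (@cyl_prob R K _ _ P _ iX F _ mB') (@cyl_prob R K _ _ P' _ iY F _ mB).
  apply: eq_bigr => i _.
  rewrite lX // lY // normal_shift //.
  by congr normal_prob; rewrite addrC subrK.
- by move=> _ /=; rewrite /pmeas /= /pushforward preimage_setT probability_setT ltry.
Qed.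


Theorem theorem1 (R : realType) (K J0 : nat) (n0 : nat -> nat)
  (s J : 'I_K.+1 -> nat) (n : 'I_K.+1 -> nat -> nat) (l u : 'I_K.+1 -> nat -> R)
  (sigma : R) (mu : 'I_K.+1 -> R) (nu : R)
  (d : measure_display) (T : measurableType d) (P : probability T R)
  (X : 'I_K.+1 -> nat -> T -> R)
  (d' : measure_display) (T' : measurableType d') (P' : probability T' R)
  (Y : 'I_K.+1 -> nat -> T' -> R) :
  valid_design J0 n0 s J n l u ->
  0 < sigma ->
  normal_outcomes P mu sigma X ->
  normal_outcomes P' (fun _ => nu) sigma Y ->
  (P (reject_true_null sigma n0 s J n l u X mu)
     <= P' (reject_true_null sigma n0 s J n l u Y (fun _ => nu)))%E.

Proof.
move=> vd s0 hX hY.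
have s0' : sigma != 0 by rewrite gt_eqF.
have [mX _] := hX; have [mY _] := hY.
pose X2 := fun k i w => X k i w + (nu - mu k).
have mX2 : forall k i, measurable_fun setT (X2 k i).
  by move=> k i; apply: measurable_funD => //; exact: measurable_cst.
pose Xc := fun (k : 'I_K.+1) (i : nat) (x : Om R K) => x (k, i).
have mXc : forall k i, measurable_fun setT (Xc k i).
  move=> k i _ B mB; rewrite setTI; apply: sub_sigma_algebra.
  exists [:: (k, i)], (fun _ => B); split => //.
  by apply/seteqP; split => x /=; [move=> H j; rewrite inE => /eqP ->|apply; rewrite inE].
have mE := manyrej sigma n0 s J n l u Xc mXc.
rewrite rtn_global.
apply: (@le_trans _ _ (P (anyrej sigma n0 s J n l u X2))).
  apply: le_measure; rewrite ?inE.
  - exact: mrtn.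
  - exact: manyrej.
  - exact: (@incl R K J0 T sigma n0 s J n l u vd s0 X mu nu).
have -> : anyrej sigma n0 s J n l u X2 =
  (fun w => (fun p => X p.1 p.2 w + (nu - mu p.1)) : Om R K) @^-1` (anyrej sigma n0 s J n l u Xc) by [].
rewrite (@law_eq R K sigma mu nu _ T P X _ T' P' Y s0' hX hY _ mE).
exact: lexx.
Qed.
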